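(* Let $n\geq 0$ and $k\geq 3$ be integers. Then $f_k(n)=n$.
   Context: $\Sigma_k=\{0,1,\ldots,k-1\}$. A border of a word $w$ is a non-empty word that is both a proper prefix and a proper suffix of $w$; $w$ is unbordered if it has no border. A border $u$ of $w$ is non-overlapping if $|u|\le |w|/2$. The smallest BP-factorization of a word $w$ is the factorization $w=w_m\cdots w_1w_0w_1\cdots w_m$ ($m\ge 0$) in which, for each $i\ge 1$, $w_i$ is the longest non-overlapping border of $w_i\cdots w_1w_0w_1\cdots w_i$, and $w_0$ is either empty or unbordered (i.e., one repeatedly removes the longest non-overlapping border from both ends until an empty or unbordered central word remains). Its width is $2m+1$ if $w_0$ is non-empty and $2m$ if $w_0$ is empty. $f_k(n)$ denotes the maximum width of the smallest BP-factorization over all length-$n$ words over $\Sigma_k$. *)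

(* Defs.v *)
From mathcomp Require Import all_boot.
Set Implicit Arguments. Unset Strict Implicit. Unset Printing Implicit Defensive.

Section Words.
Variable T : eqType.

Definition is_border (u w : seq T) : bool :=
  [&& 0 < size u, size u < size w,
      prefix u w & suffix u w].

Definition unbordered (w : seq T) : bool :=
  all (fun i => ~~ is_border (take i w) w) (iota 0 (size w)).

Definition is_nonoverlap_border (u w : seq T) : bool :=
  is_border u w && ((size u).*2 <= size w).

Definition lnob_len (w : seq T) : nat :=
  \max_(i <- iota 0 (size w).+1 | is_nonoverlap_border (take i w) w) i.

(* Width of the smallest BP-factorization, computed with fuel:
   remove the longest non-overlapping border from both ends (adding 2 to
   the width) until the central word is empty (add 0) or has no
   non-overlapping border; in the latter case it is non-empty and
   unbordered, contributing 1. *)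
Fixpoint bp_width_aux (fuel : nat) (w : seq T) : nat :=
  match fuel with
  | 0 => 0
  | fuel'.+1 =>
      if size w == 0 then 0
      else let l := lnob_len w in
           if l == 0 then 1
           else (bp_width_aux fuel' (drop l (take (size w - l) w))).+2
  end.

Definition bp_width (w : seq T) : nat := bp_width_aux (size w).+1 w.

End Words.

Definition f (k n : nat) : nat :=
  \max_(w : n.-tuple 'I_k) bp_width (tval w).

(* Main.v *)
Require Import Defs.
From mathcomp Require Import all_boot.
From mathcomp Require Import zify.

Section Aux.
Variable T : eqType.

Lemma nob_size (w : seq T) i : i < (size w).+1 ->
  is_nonoverlap_border (take i w) w -> 0 < i /\ i.*2 <= size w.
Proof.
move=> hi; rewrite /is_nonoverlap_border /is_border size_takel; last by [].
by case/andP => /and4P [-> _ _ _] ->.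
Qed.

Lemma lnob_bound (w : seq T) : (lnob_len w).*2 <= size w.
Proof.
have : lnob_len w <= size w %/ 2.
  apply/bigmax_leqP_seq => i; rewrite mem_iota add0n => /andP[_ hi] hb.
  have [_ h] := nob_size _ _ hi hb; rewrite -muln2 in h; lia.
rewrite -muln2; lia.
Qed.

Lemma lnob_size1 (w : seq T) : size w = 1 -> lnob_len w = 0.
Proof.
move=> hs; apply/eqP; rewrite -leqn0; apply/bigmax_leqP_seq => i.
rewrite mem_iota add0n => /andP[_ hi] hb.
have [h1 h2] := nob_size _ _ hi hb; rewrite hs -muln2 in h2; lia.
Qed.

Lemma bp_le fuel (w : seq T) : bp_width_aux fuel w <= size w.
Proof.
elim: fuel w => [|fu IH] w //=.
case: ifP => // hs; case: ifP => hl; first by move: hs; case: (size w).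
have := IH (drop (lnob_len w) (take (size w - lnob_len w) w)).
rewrite size_drop size_takel ?leq_subr //.
have := lnob_bound w; move/negbT: hl; move/negbT: hs.
rewrite -muln2 -!lt0n => h1 h2 h3 hx.
move: hx; move: (bp_width_aux _ _) => x hx; move: (lnob_len w) h2 h3 hx => l h2 h3 hx; lia.
Qed.
End Aux.

Definition g (n p : nat) : nat := (n %/ 2 - minn p (n - 1 - p)) %% 3.

Section Constr.
Variables (k : nat) (hk : 3 <= k).

Definition o3 (x : nat) : 'I_k :=
  Ordinal (leq_trans (ltn_pmod x (isT : 0 < 3)) hk).

Definition wd (n : nat) : seq 'I_k := mkseq (fun p => o3 (g n p)) n.

Lemma size_wd n : size (wd n) = n.
Proof. by rewrite size_mkseq. Qed.

Lemma nth_wd n p x0 : p < n -> val (nth x0 (wd n) p) = g n p.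
Proof. by move=> hp; rewrite nth_mkseq //= modn_mod. Qed.

Lemma wd_step n : drop 1 (take (size (wd n.+2) - 1) (wd n.+2)) = wd n.
Proof.
apply: (@eq_from_nth _ (o3 0)).
  by rewrite size_drop size_takel ?leq_subr // !size_wd; lia.
move=> p; rewrite size_drop size_takel ?leq_subr // !size_wd => hp.
have hp' : p < n by lia.
apply: val_inj; rewrite nth_drop nth_take; last lia.
rewrite !nth_wd //; last lia.
rewrite /g; congr (_ %% 3); lia.
Qed.

Lemma lnob_wd n : lnob_len (wd n.+2) = 1.
Proof.
apply/eqP; rewrite eqn_leq; apply/andP; split.
  apply/bigmax_leqP_seq => i; rewrite mem_iota add0n => /andP[_ hi] hb.
  have [h0 h2] := nob_size _ _ _ hi hb.
  rewrite leqNgt; apply/negP => hi2.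
  move: hb => /andP [/and4P [_ _ _ hs] _].
  move: hs; rewrite suffixE size_takel; last by [].
  rewrite size_wd => /eqP hs.
  rewrite size_wd in h2 hi; rewrite -muln2 in h2.
  have e0 : val (nth (o3 0) (drop (n.+2 - i) (wd n.+2)) 0) =
            val (nth (o3 0) (take i (wd n.+2)) 0) by rewrite hs.
  have e1 : val (nth (o3 0) (drop (n.+2 - i) (wd n.+2)) 1) =
            val (nth (o3 0) (take i (wd n.+2)) 1) by rewrite hs.
  move: e0 e1; rewrite !nth_drop !nth_take // !nth_wd; try lia.
  rewrite /g; lia.
apply: (@bigmaxn_sup_seq _ _ 1); rewrite ?mem_iota ?size_wd //.
rewrite /is_nonoverlap_border /is_border size_takel ?size_wd //.
rewrite prefix_take /= suffixE; apply/andP; split; last by [].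
apply/eqP; apply: (@eq_from_nth _ (o3 0)).
  by rewrite size_drop size_wd /=; lia.
move=> p; rewrite size_drop size_wd => hp.
case: p hp => [|p] hp; last by move: hp => /=; lia.
apply: val_inj; rewrite nth_drop nth_wd; last by rewrite /=; lia.
rewrite [RHS]/= modn_mod /g; congr (_ %% 3); rewrite /=; lia.
Qed.

Lemma bp_wd m : forall n, n <= m -> forall fuel, n < fuel ->
  bp_width_aux fuel (wd n) = n.
Proof.
elim: m => [|m IH] n hn fuel hf.
  have -> : n = 0 by lia.
  by case: fuel hf.
case: fuel hf => [|fu] hf //=.
case: n hn hf => [|[|n]] hn hf; rewrite size_wd //.
  by rewrite lnob_size1 ?size_wd.
rewrite lnob_wd; have := wd_step n; rewrite size_wd => ->; rewrite IH //; lia.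
Qed.
End Constr.

Theorem theorem7 (n k : nat) (hk : 3 <= k) : f k n = n.
Proof.
apply/eqP; rewrite eqn_leq; apply/andP; split.
  apply/bigmax_leqP => w _.
  by apply: leq_trans (bp_le _ _ _) _; rewrite size_tuple.
have hs : size (wd _ hk n) == n by rewrite size_wd.
apply: leq_trans (leq_bigmax (F := fun w : n.-tuple 'I_k => bp_width (tval w)) (Tuple hs)).
by rewrite /= /bp_width size_wd (bp_wd _ _ n).
Qed.
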